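(* Let $p$ be a prime. There exists a subset $A\subseteq\mathbb{F}_p$ with $A-A\doteq\mathcal{R}_p$ if and only if $p=2n(n-1)+1$ for some integer $n$ and there exists $\alpha\in\mathcal{O}$ such that $|\alpha|^2=n+\rho$ and $\operatorname{tr}(\alpha\zeta^{-k})\in\{-n,p-n\}$ for every integer $k$.
   Context: $\mathcal{R}_p$ is the set of nonzero quadratic residues modulo $p$. $A-A\doteq S$ means: every element of $S$ has exactly one representation as $a'-a''$ with $a',a''\in A$, and every difference $a'-a''$ with $a'\ne a''$ in $A$ lies in $S$. $\zeta\in\mathbb{C}$ is a primitive $p$-th root of unity, $K=\mathbb{Q}(\zeta)$, $\mathcal{O}=\mathbb{Z}[\zeta]$ its ring of integers, $\operatorname{tr}$ the trace from $K$ to $\mathbb{Q}$, $|\cdot|$ the complex absolute value, and $\rho:=\sum_{x\in\mathcal{R}_p}\zeta^x$ (the quadratic Gaussian period, equal to $(\sqrt p-1)/2$ for $\zeta=e^{2\pi i/p}$ when $p\equiv1\pmod 4$). *)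

(* Defs.v *)
From HB Require Import structures.
From mathcomp Require Import all_boot all_order all_algebra all_field.
Set Implicit Arguments. Unset Strict Implicit. Unset Printing Implicit Defensive.
Import Order.TTheory GRing.Theory Num.Theory.
Local Open Scope ring_scope.

Definition QR (p : nat) : {set 'F_p} :=
  [set x : 'F_p | (x != 0) && [exists y : 'F_p, y ^+ 2 == x]].

Definition diff_exact (p : nat) (A S : {set 'F_p}) : Prop :=
  (forall s, s \in S ->
     #|[set u in setX A A | u.1 - u.2 == s]| = 1%N) /\
  (forall a1 a2, a1 \in A -> a2 \in A -> a1 != a2 -> a1 - a2 \in S).

(* the element q(z) of Z[z], for q an integer polynomial *)
Definition Zeval (z : algC) (q : {poly int}) : algC := (map_poly intr q).[z].

(* trace from Q(z) to Q of the element q(z), z a primitive p-th root of unity: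
   sum of its conjugates under the embeddings z |-> z^j, 1 <= j < p *)
Definition cyc_tr (p : nat) (z : algC) (q : {poly int}) : algC :=
  \sum_(1 <= j < p) Zeval (z ^+ j) q.

Definition gauss_period (p : nat) (z : algC) : algC :=
  \sum_(x in QR p) z ^+ (x : nat).

(* Main.v *)
Require Import Defs.
From HB Require Import structures.
From mathcomp Require Import all_boot all_order all_algebra all_field.
From mathcomp Require Import ring lra zify.
Import Order.TTheory GRing.Theory Num.Theory.
Local Open Scope ring_scope.

Section S.
Variables (p : nat) (z : algC).
Hypotheses (pr_p : prime p) (prim_z : p.-primitive_root z).

Lemma geo_sum t : \sum_(j < p) z ^+ (j * t) = if (p %| t)%N then p%:R else 0.
Proof.
have p0 := prim_order_gt0 prim_z.
case: ifP => ht.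
  rewrite (eq_bigr (fun _ => 1)) ?sumr_const ?card_ord // => j _.
  by rewrite mulnC exprM; move: ht; rewrite (prim_order_dvd prim_z) => /eqP ->; rewrite expr1n.
have w1 : z ^+ t != 1 by rewrite -(prim_order_dvd prim_z) ht.
have := subrX1 (z ^+ t) p.
have ->: (z ^+ t) ^+ p = 1 by rewrite -exprM mulnC exprM (prim_expr_order prim_z) expr1n.
rewrite subrr => /esym/eqP.
rewrite mulf_eq0 subr_eq0 (negbTE w1) /= => /eqP H.
rewrite -[RHS]H; apply: eq_bigr => j _; by rewrite mulnC exprM.
Qed.

Definition E (x : 'F_p) : algC := z ^+ (x : nat).

Lemma E_nat (a : nat) : E (a%:R) = z ^+ a.
Proof. by rewrite /E val_Fp_nat // prim_expr_mod. Qed.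

Lemma F_lt (x : 'F_p) : (x < p)%N.
Proof. by case: x => /= m; rewrite Fp_cast. Qed.

Lemma F_natK (x : 'F_p) : ((x : nat)%:R : 'F_p) = x.
Proof. by apply: val_inj; rewrite /= val_Fp_nat // modn_small // F_lt. Qed.

Lemma ED x y : E (x + y) = E x * E y.
Proof. by rewrite -(F_natK x) -(F_natK y) -natrD !E_nat exprD. Qed.

Lemma E0 : E 0 = 1.
Proof. by rewrite /E /= expr0. Qed.

Lemma E_neq0 x : E x != 0.
Proof. by rewrite /E expf_neq0 // (prim_root_eq0 prim_z) -lt0n (prim_order_gt0 prim_z). Qed.

Lemma EN x : E (- x) = (E x)^-1.
Proof.
apply: (mulIf (E_neq0 x)); rewrite -ED addNr E0 mulVf //; exact: E_neq0.
Qed.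

Lemma normE x : `|E x| = 1.
Proof.
apply/eqP; rewrite -(@pexpr_eq1 _ _ p (prim_order_gt0 prim_z)) ?normr_ge0 //.
by rewrite -normrX /E -exprM mulnC exprM (prim_expr_order prim_z) expr1n normr1.
Qed.

Lemma conjE x : (E x)^* = E (- x).
Proof.
rewrite EN; apply: (mulIf (E_neq0 x)); rewrite mulVf ?E_neq0 //.
by rewrite -normCKC normE expr1n.
Qed.

Lemma pQ_poly (f : nat -> rat) n :
  map_poly (ratr : rat -> algC) (\poly_(i < n) f i) = \poly_(i < n) ratr (f i).
Proof. by apply/polyP => i; rewrite coef_map /= !coef_poly; case: ifP => _ //; rewrite rmorph0. Qed.

Lemma indep (e : nat -> int) :
  \sum_(i < p) (e i)%:~R * z ^+ i = 0 -> forall i, (i < p)%N -> e i = e 0%N.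
Proof.
move=> H i ip.
have p1 := prime_gt1 pr_p.
have [pf [Dpf mon] dv] := minCpolyP z.
have szpf : size pf = p.
  rewrite -(size_map_poly (@ratr algC)) -Dpf.
  rewrite (minCpoly_cyclotomic prim_z) size_cyclotomic totient_prime //.
  by rewrite prednK // ltnW.
pose P := \poly_(i < p) ((e i)%:~R : rat).
pose Q := \poly_(i < p) (1 : rat).
have rP : pf %| P.
  rewrite -dv pQ_poly /root horner_poly.
  under eq_bigr do rewrite ratr_int.
  by rewrite H.
have rQ : pf %| Q.
  rewrite -dv pQ_poly /root horner_poly.
  under eq_bigr do rewrite rmorph1 mul1r -[i0 in z ^+ i0]muln1.
  by rewrite geo_sum dvdn1 (gtn_eqF p1).
have szQ : size Q = p by rewrite size_poly_eq ?oner_neq0.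
have [P0|nP0] := eqVneq P 0.
  have : P`_i = P`_0 by rewrite P0 !coef0.
  by rewrite !coef_poly ip (prime_gt0 pr_p) => /eqP; rewrite eqr_int => /eqP.
have szP : size P = p.
  apply/eqP; rewrite eqn_leq size_poly -{1}szpf dvdp_leq //.
have ePQ : P %= Q.
  apply: eqp_trans (_ : P %= pf) _; first by rewrite eqp_sym -dvdp_size_eqp // szP szpf.
  by rewrite -dvdp_size_eqp // szQ szpf.
case/eqpP: ePQ => [[c1 c2]] /andP[c10 c20] /= Hc.
have Hk k : (k < p)%N -> c1 * (e k)%:~R = c2.
  move=> kp; have := congr1 (fun r : {poly rat} => r`_k) Hc.
  by rewrite /= !coefZ !coef_poly kp mulr1.
have := Hk i ip; rewrite -(Hk 0%N (prime_gt0 pr_p)).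
by move: c10 => /= c10; move/(mulfI c10)/eqP; rewrite eqr_int => /eqP.
Qed.

Definition N (X : {set 'F_p}) (d : 'F_p) : nat :=
  #|[set u in setX X X | u.1 - u.2 == d]|.

Lemma sq_sigma (X : {set 'F_p}) :
  `|\sum_(x in X) E x| ^+ 2 = \sum_(d : 'F_p) (N X d)%:R * E d.
Proof.
rewrite normCK rmorph_sum /=.
under [X in _ * X]eq_bigr do rewrite conjE.
rewrite big_distrl /=.
under eq_bigr do rewrite big_distrr /=.
under eq_bigr do under eq_bigr do rewrite -ED.
rewrite pair_big_dep /=.
rewrite (partition_big (fun u => u.1 - u.2) xpredT) //=.
apply: eq_bigr => d _.
rewrite (eq_bigr (fun _ => E d)); last by move=> u /andP[_ /eqP ->].
rewrite sumr_const mulr_natl /N; congr (_ *+ _).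
by apply: eq_card => u; rewrite !inE.
Qed.

Lemma N0 (X : {set 'F_p}) : N X 0 = #|X|.
Proof.
rewrite /N -(card_imset X (fun x y (h : (x, x) = (y, y)) => congr1 fst h)).
apply: eq_card => u; rewrite !inE subr_eq0.
apply/andP/imsetP => [[/andP[h1 _] /eqP e] | [x xX ->]]; last by rewrite /= xX eqxx.
by exists u.1 => //; case: u e h1 => a b /= ->.
Qed.

Lemma sumN (X : {set 'F_p}) : (\sum_(d : 'F_p) N X d = #|X| * #|X|)%N.
Proof.
rewrite -cardsX -sum1_card (partition_big (fun u => u.1 - u.2) xpredT) //=.
apply: eq_bigr => d _; rewrite /N -sum1_card; apply: eq_bigl => u; by rewrite !inE.
Qed.

Lemma sumF (f : 'F_p -> algC) : \sum_(d : 'F_p) f d = \sum_(i < p) f (i%:R).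
Proof.
pose h (i : 'I_p) : 'F_p := (val i)%:R.
pose k (x : 'F_p) : 'I_p := Ordinal (F_lt x).
rewrite (reindex h) //; exists k => [i _ | x _]; last by apply: F_natK.
by apply: val_inj; rewrite /k /h /= val_Fp_nat // modn_small.
Qed.

Lemma QR0 : (0 : 'F_p) \notin QR p.
Proof. by rewrite inE eqxx. Qed.

Lemma QR1 : (1 : 'F_p) \in QR p.
Proof. by rewrite inE oner_neq0; apply/existsP; exists 1; rewrite expr1n. Qed.

Lemma QR_le : (#|QR p| <= p.-1)%N.
Proof.
apply: (@leq_trans #|predC1 (0 : 'F_p)|); last by rewrite cardC1 card_Fp.
apply/subset_leq_card/subsetP => x.
by rewrite !inE => /andP[].
Qed.

Lemma two_neq0 : p != 2%N -> (2%:R : 'F_p) != 0.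
Proof.
move=> p2; apply/negP => /eqP h.
have := congr1 (@nat_of_ord _) h; rewrite (val_Fp_nat pr_p) /= => /eqP; rewrite -/(dvdn p 2) => hd.
have := dvdn_leq (isT : (0 < 2)%N) hd; have := prime_gt1 pr_p.
move: p2; clear; case: p => [|[|[|q]]] //.
Qed.

Lemma cardQR : p != 2%N -> (2 * #|QR p| = p.-1)%N.
Proof.
move=> p2.
have -> : p.-1 = #|predC1 (0 : 'F_p)| by rewrite cardC1 card_Fp.
rewrite -[#|predC1 _|]sum1_card.
rewrite (partition_big (fun y : 'F_p => y ^+ 2) (mem (QR p))) /=; last first.
  move=> y; rewrite !inE => y0; rewrite expf_neq0 //=.
  by apply/existsP; exists y.
rewrite mulnC -sum_nat_const; apply: eq_bigr => x.
rewrite inE => /andP[x0 /existsP[y0 /eqP hy0]].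
have y00 : y0 != 0 by apply: contraNneq x0 => e; rewrite -hy0 e expr0n.
have ny : y0 != - y0.
  apply/negP => /eqP h.
  have : y0 *+ 2 = 0 by rewrite mulr2n {1}h addNr.
  by rewrite -mulr_natl => /eqP; rewrite mulf_eq0 (negbTE y00) orbF (negbTE (two_neq0 p2)).
have -> : \sum_(i in predC1 (0 : 'F_p) | i ^+ 2 == x) 1%N = #|[set y0; -y0]|.
  rewrite -sum1_card; apply: eq_bigl => y.
  rewrite !inE -hy0 eqf_sqr.
  case: (eqVneq y y0) => [->|_]; first by rewrite y00.
  case: (eqVneq y (- y0)) => [->|_]; last by rewrite andbF.
  by rewrite oppr_eq0 y00.
by rewrite cards2 ny.
Qed.

Lemma key (X : {set 'F_p}) (n : int) :
  `|\sum_(x in X) E x| ^+ 2 = n%:~R + \sum_(x in QR p) E x ->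
  forall d, d != 0 -> (N X d)%:Z = (d \in QR p)%:Z + (#|X|%:Z - n).
Proof.
move=> H.
pose e' (d : 'F_p) : int := (N X d)%:Z - (d == 0)%:Z * n - (d \in QR p)%:Z.
have S0 : \sum_(d : 'F_p) (e' d)%:~R * E d = 0.
  have e1 : forall d, (e' d)%:~R * E d =
      (N X d)%:R * E d - ((d == 0)%:R * n%:~R * E d + (d \in QR p)%:R * E d).
    by move=> d; rewrite /e' !intrB !intrM !pmulrn; ring.
  under eq_bigr do rewrite e1.
  rewrite sumrB -sq_sigma H big_split /=.
  have h1 : \sum_(d : 'F_p) (d == 0)%:R * n%:~R * E d = n%:~R.
    rewrite (bigD1 0) //= big1 => [|d /negbTE ->]; last by rewrite !mul0r.
    by rewrite E0 mulr1 addr0 mul1r.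
  have h2 : \sum_(d : 'F_p) (d \in QR p)%:R * E d = \sum_(x in QR p) E x.
    rewrite [RHS]big_mkcond /=; apply: eq_bigr => d _.
    by case: (d \in QR p); rewrite ?mul1r ?mul0r.
  by rewrite h1 h2 subrr.
have S1 : \sum_(i < p) (e' i%:R)%:~R * z ^+ i = 0.
  by rewrite -[RHS]S0 sumF; apply: eq_bigr => i _; rewrite E_nat.
have Hi := @indep (fun i => e' i%:R) S1.
move=> d d0.
have := Hi (nat_of_ord d) (F_lt d); rewrite F_natK /e' /= (negbTE d0) (negbTE QR0) N0 mul0r mul1r subr0 => h.
move: h; rewrite /= subr0 => h; lia.
Qed.

Lemma sumQR : \sum_(d : 'F_p | d != 0) ((d \in QR p) : nat) = #|QR p|.
Proof.
rewrite -sum1_card [RHS]big_mkcond /= [RHS](bigD1 0) //= (negbTE QR0) add0n.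
by apply: eq_bigr => d _; case: (d \in QR p).
Qed.

Lemma count_card (X : {set 'F_p}) (n : int) :
  p%:Z = 2 * n * (n - 1) + 1 ->
  (forall d, d != 0 -> (N X d)%:Z = (d \in QR p)%:Z + (#|X|%:Z - n)) ->
  #|X|%:Z = n \/ #|X|%:Z + n = p%:Z.
Proof.
move=> pE H.
have p2 : p != 2%N by apply/eqP => e; move: pE; rewrite e; lia.
have hq := cardQR p2.
have hs : (#|X| * #|X|)%N%:Z = #|X|%:Z + \sum_(d : 'F_p | d != 0) (N X d)%:Z.
  rewrite -sumN (bigD1 0) //= N0 PoszD; congr (_ + _).
  by rewrite -natz natr_sum; apply: eq_bigr => d _; rewrite natz.
have hs2 : \sum_(d : 'F_p | d != 0) (N X d)%:Z = #|QR p|%:Z + (p.-1)%:Z * (#|X|%:Z - n).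
  rewrite (eq_bigr _ H) big_split /=; congr (_ + _).
    by rewrite -sumQR -natz natr_sum; apply: eq_bigr => d _; rewrite natz.
  rewrite (eq_bigl (fun d => d \in predC1 0)) // sumr_const cardC1 card_Fp //.
  by rewrite -mulr_natl natz.
have p1 := prime_gt1 pr_p.
rewrite hs2 in hs.
have : (#|X|%:Z - n) * (#|X|%:Z + n - p%:Z) = 0.
  nia.
by move/eqP; rewrite mulf_eq0 => /orP[] /eqP h; [left|right]; lia.
Qed.

Lemma Tsum t : \sum_(1 <= j < p) z ^+ (j * t) = (if (p %| t)%N then p%:R else 0) - 1.
Proof.
rewrite -geo_sum -(big_mkord xpredT (fun j => z ^+ (j * t))).
by rewrite (big_ltn (prime_gt0 pr_p)) mul0n expr0 addrAC subrr add0r.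
Qed.

Lemma trace_fw (A : {set 'F_p}) (m : nat) :
  cyc_tr p z ((\sum_(a in A) 'X^(nat_of_ord a)) * 'X^m) =
  \sum_(a in A) ((if (p %| (nat_of_ord a + m))%N then p%:R else 0) - 1).
Proof.
rewrite /cyc_tr /Zeval.
under eq_bigr do rewrite rmorphM rmorph_sum /= map_polyXn hornerM horner_sum hornerXn mulr_suml.
rewrite exchange_big /=; apply: eq_bigr => a _.
rewrite -Tsum; apply: eq_bigr => j _.
by rewrite map_polyXn hornerXn -!exprM -exprD mulnDr !(mulnC j).
Qed.

Lemma trace_gen (q : {poly int}) (m : nat) :
  cyc_tr p z (q * 'X^m) =
  \sum_(i < size q) (q`_i)%:~R * ((if (p %| (i + m))%N then p%:R else 0) - 1).
Proof.
rewrite /cyc_tr /Zeval.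
under eq_bigr do rewrite rmorphM /= map_polyXn hornerM hornerXn horner_coef
  (size_map_inj_poly (@intr_inj algC)) // mulr_suml.
rewrite exchange_big /=; apply: eq_bigr => i _.
rewrite -Tsum mulr_sumr; apply: eq_bigr => j _.
by rewrite coef_map /= -!exprM -mulrA -exprD mulnDr !(mulnC j).
Qed.

Definition cq (q : {poly int}) (x : 'F_p) : int :=
  \sum_(i < size q | ((nat_of_ord i)%:R : 'F_p) == x) q`_i.

Lemma Zeval_group (q : {poly int}) :
  Zeval z q = \sum_(x : 'F_p) (cq q x)%:~R * E x.
Proof.
rewrite /Zeval horner_coef (size_map_inj_poly (@intr_inj algC)) //.
rewrite (partition_big (fun i : 'I_(size q) => ((nat_of_ord i)%:R : 'F_p)) xpredT) //=.
apply: eq_bigr => x _; rewrite /cq rmorph_sum /= mulr_suml.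
apply: eq_bigr => i /eqP <-; by rewrite coef_map /= E_nat.
Qed.

Lemma sumE0 : \sum_(x : 'F_p) E x = 0.
Proof.
rewrite sumF (eq_bigr (fun i : 'I_p => z ^+ (i * 1))); last by move=> i _; rewrite E_nat muln1.
by rewrite geo_sum dvdn1 (gtn_eqF (prime_gt1 pr_p)).
Qed.

Lemma Nexact (X : {set 'F_p}) : diff_exact X (QR p) -> forall d, d != 0 -> N X d = (d \in QR p).
Proof.
move=> [h1 h2] d d0; case hd: (d \in QR p); first exact: h1.
apply/eqP; rewrite cards_eq0; apply/eqP/setP => u; rewrite !inE.
apply/negP => /andP[/andP[u1 u2] /eqP ud].
have : u.1 != u.2 by rewrite -subr_eq0 ud.
by move=> /(h2 _ _ u1 u2); rewrite ud hd.
Qed.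

Lemma diffE (X : {set 'F_p}) : (forall d, d != 0 -> (N X d)%:Z = (d \in QR p)%:Z) -> diff_exact X (QR p).
Proof.
move=> H; split.
  move=> s hs; have s0 : s != 0 by apply: contraTneq hs => ->; exact: QR0.
  by have := H s s0; rewrite hs => -[].
move=> a1 a2 h1 h2 ne.
have d0 : a1 - a2 != 0 by rewrite subr_eq0.
have := H _ d0; case: (a1 - a2 \in QR p) => // /eqP; rewrite /= eqz_nat cards_eq0 => /eqP e.
have : (a1, a2) \in [set u in setX X X | u.1 - u.2 == a1 - a2] by rewrite !inE h1 h2 eqxx.
by rewrite e inE.
Qed.

Lemma sumN_int (X : {set 'F_p}) :
  (#|X| * #|X|)%N%:Z = #|X|%:Z + \sum_(d : 'F_p | d != 0) (N X d)%:Z.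
Proof.
rewrite -sumN (bigD1 0) //= N0 PoszD; congr (_ + _).
by rewrite -natz natr_sum; apply: eq_bigr => d _; rewrite natz.
Qed.

Lemma divF (i : nat) (x : 'F_p) :
  (p %| i + nat_of_ord (-x))%N = ((i%:R : 'F_p) == x).
Proof.
transitivity ((((i + nat_of_ord (-x))%:R : 'F_p) == 0)).
  by rewrite /dvdn -val_eqE /= (val_Fp_nat pr_p).
by rewrite natrD F_natK subr_eq0.
Qed.
End S.
Arguments E : clear implicits.


Lemma forward (p : nat) (zeta : algC) :
  prime p -> p.-primitive_root zeta ->
  (exists A : {set 'F_p}, diff_exact A (QR p)) ->
  (exists n : int,
     (p%:Z = 2 * n * (n - 1) + 1) /\
     exists q : {poly int},
       `|Zeval zeta q| ^+ 2 = n%:~R + gauss_period p zeta /\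
       forall k : int,
         cyc_tr p zeta (q * 'X^(absz ((- k) %% p%:Z)%Z))
           \in [:: (- n)%:~R; (p%:Z - n)%:~R]).
Proof.
move=> pr prim [A hA].
have hN := @Nexact p A hA.
have hs := @sumN_int p A.
have hsum : \sum_(d : 'F_p | d != 0) (N p A d)%:Z = #|QR p|%:Z.
  rewrite -(sumQR p) -natz natr_sum; apply: eq_bigr => d d0; by rewrite natz hN.
rewrite hsum in hs.
have p2 : p != 2%N.
  apply/eqP => e.
  have h1 := @QR_le p pr; have e1 : p.-1 = 1%N by rewrite e.
  rewrite e1 in h1.
  have h0 : (0 < #|QR p|)%N by apply/card_gt0P; exists 1; exact: QR1.
  have h2 : #|QR p| = 1%N by apply/eqP; rewrite eqn_leq h1 h0.
  move: hs; rewrite h2 -PoszD => /eqP; rewrite eqz_nat => /eqP.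
  case: #|A| => [|[|m]] //; nia.
have hq := @cardQR p pr p2.
have p0 := prime_gt0 pr.
exists #|A|%:Z; split; first by nia.
exists (\sum_(a in A) 'X^(nat_of_ord a)); split.
  have -> : Zeval zeta (\sum_(a in A) 'X^(nat_of_ord a)) = \sum_(a in A) E p zeta a.
    rewrite /Zeval rmorph_sum horner_sum; apply: eq_bigr => a _.
    by rewrite /= map_polyXn hornerXn.
  rewrite (@sq_sigma p zeta pr prim) (bigD1 0) //= N0 (E0 p zeta) mulr1; congr (_ + _).
  rewrite /gauss_period [RHS]big_mkcond /= [RHS](bigD1 0) //= (negbTE (QR0 p)) add0r.
  apply: eq_bigr => d d0; rewrite hN //; case: (d \in QR p); rewrite ?mul1r ?mul0r //.
move=> k; rewrite (@trace_fw p zeta pr prim) sumrB sumr_const.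
set m' := absz _.
case: (pickP [pred a in A | p %| (nat_of_ord a + m')]%N) => [a /andP[aA ha] | none].
  have -> : \sum_(i in A) (if (p %| nat_of_ord i + m')%N then (p%:R : algC) else 0) = p%:R.
    rewrite (bigD1 a) //= ha big1 ?addr0 // => b /andP[bA ba].
    case: ifP => // hb; exfalso; move/negP: ba; apply; apply/eqP/val_inj => /=.
    rewrite -(modn_small (@F_lt p pr a)) -(modn_small (@F_lt p pr b)).
    apply/eqP; rewrite -(eqn_modDr m'); apply/eqP.
    by move: ha hb; rewrite /dvdn => /eqP -> /eqP ->.
  by rewrite !inE; apply/orP; right; rewrite intrB.
have -> : \sum_(i in A) (if (p %| nat_of_ord i + m')%N then (p%:R : algC) else 0) = 0.
  rewrite big1 // => b bA; have := none b; rewrite /= bA /= => ->; done.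
by rewrite !inE; apply/orP; left; rewrite add0r intrN.
Qed.

Lemma backward (p : nat) (zeta : algC) :
  prime p -> p.-primitive_root zeta ->
  (exists n : int,
     (p%:Z = 2 * n * (n - 1) + 1) /\
     exists q : {poly int},
       `|Zeval zeta q| ^+ 2 = n%:~R + gauss_period p zeta /\
       forall k : int,
         cyc_tr p zeta (q * 'X^(absz ((- k) %% p%:Z)%Z))
           \in [:: (- n)%:~R; (p%:Z - n)%:~R]) ->
  (exists A : {set 'F_p}, diff_exact A (QR p)).
Proof.
move=> pr prim [n [pE [q [hnorm htr]]]].
set S := \sum_(i < size q) q`_i.
have p0 := prime_gt0 pr.
have hc : forall x : 'F_p,
    (p%:Z * cq p q x - S + n == 0) || (p%:Z * cq p q x - S + n == p%:Z).
  move=> x; have := htr (- (nat_of_ord (-x))%:Z).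
  have -> : absz ((- - (nat_of_ord (-x))%:Z) %% p%:Z)%Z = nat_of_ord (-x).
    by rewrite opprK modz_nat absz_nat modn_small // (@F_lt p pr).
  rewrite (@trace_gen p zeta pr prim).
  have -> : \sum_(i < size q) (q`_i)%:~R *
      ((if (p %| i + nat_of_ord (-x))%N then (p%:R : algC) else 0) - 1)
      = ((p%:Z * cq p q x - S))%:~R.
    rewrite (eq_bigr (fun i : 'I_(size q) => (q`_i)%:~R *
      ((if ((nat_of_ord i)%:R : 'F_p) == x then (p%:R : algC) else 0) - 1))); last first.
      by move=> i _; rewrite (@divF p pr).
    rewrite intrB intrM /cq /S !rmorph_sum /= mulr_sumr.
    rewrite (big_mkcond (fun i : 'I_(size q) => ((nat_of_ord i)%:R : 'F_p) == x)) /= -sumrB.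
    apply: eq_bigr => i _; case: ifP => _; rewrite ?mulr0 ?mulr1 ?sub0r ?mulrN1; ring.
  rewrite !inE => /orP[] /eqP/(@intr_inj algC) h; apply/orP; [left|right]; apply/eqP; lia.
pose A := [set x : 'F_p | p%:Z * cq p q x - S + n == p%:Z].
have pz : p%:Z != 0 by rewrite eqz_nat -lt0n.
have hcA : forall x, cq p q x = (cq p q 0 - (0 \in A)%:Z) + (x \in A)%:Z.
  have h2 : forall x, p%:Z * (cq p q x - (x \in A)%:Z) = S - n.
    move=> x; rewrite inE; case: eqP => h /=.
      by rewrite mulrBr mulr1; lia.
    case/orP: (hc x) => /eqP h'; last by case: h.
    by rewrite subr0; lia.
  move=> x; have := h2 x; rewrite -(h2 0) => /(mulfI pz); lia.
set t := cq p q 0 - _ in hcA.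
have Za : Zeval zeta q = \sum_(x in A) E p zeta x.
  rewrite (@Zeval_group p zeta pr prim).
  under eq_bigr do rewrite hcA intrD mulrDl.
  rewrite big_split /= -mulr_sumr (@sumE0 p zeta pr prim) mulr0 add0r.
  rewrite [RHS]big_mkcond /=; apply: eq_bigr => x _.
  by case: (x \in A); rewrite ?mul1r ?mul0r.
have hk := @key p zeta pr prim A n (etrans (congr1 (fun u => `|u| ^+ 2) (esym Za)) hnorm).
have [hA|hA] := @count_card p zeta pr prim A n pE hk.
  exists A; apply: diffE => d d0; rewrite hk // hA subrr addr0 //.
exists (~: A).
have hB : \sum_(x in ~: A) E p zeta x = - \sum_(x in A) E p zeta x.
  have h0 := @sumE0 p zeta pr prim; rewrite (bigID (fun x => x \in A)) /= in h0.
  rewrite (eq_bigl (fun x => x \notin A)); last by move=> x; rewrite inE.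
  by apply/eqP; rewrite -addr_eq0 addrC h0.
have hkB := @key p zeta pr prim (~: A) n.
have cB : #|~: A|%:Z = n.
  have := cardsC A; rewrite (@card_Fp p pr) => e.
  by apply: (@addrI _ (#|A|%:Z)); rewrite hA -PoszD e.
apply: diffE => d d0; rewrite hkB // ?cB ?subrr ?addr0 //.
by rewrite hB normrN -Za.
Qed.

Theorem propositionA1 (p : nat) (zeta : algC) :
  prime p -> p.-primitive_root zeta ->
  (exists A : {set 'F_p}, diff_exact A (QR p)) <->
  (exists n : int,
     (p%:Z = 2 * n * (n - 1) + 1) /\
     exists q : {poly int},
       `|Zeval zeta q| ^+ 2 = n%:~R + gauss_period p zeta /\
       forall k : int,
         cyc_tr p zeta (q * 'X^(absz ((- k) %% p%:Z)%Z))
           \in [:: (- n)%:~R; (p%:Z - n)%:~R]).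
Proof.
move=> pr prim; split; [exact: forward | exact: backward].
Qed.
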